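(* Let $x,k,r$ be positive integers and let $p$ be a prime. Then \[ x^3 + (x+1)^3 + \cdots + (x+k-1)^3 = (p^r)^2 \] holds if and only if $(x,k,p,r) = (p^{2c},1,p,3c)$ for some positive integer $c$, or $(x,k,p,r) = (1,2,3,1)$. *)

(* Defs.v *)
From mathcomp Require Import all_boot.

(* Main.v *)
Require Import Defs.
From mathcomp Require Import all_boot.
From mathcomp Require Import zify.

Lemma key (y k : nat) :
  ((\sum_(0 <= i < k) (y.+1 + i)) * 2 = k * (2 * y + k + 1)) /\
  (\sum_(0 <= i < k) (y.+1 + i) ^ 3 =
   (\sum_(0 <= i < k) (y.+1 + i)) * ((\sum_(0 <= i < k) (y.+1 + i)) + y.+1 * y)).
Proof.
elim: k => [|k [IH1 IH2]]; first by rewrite !big_geq.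
rewrite !big_nat_recr //= IH2.
set S := \sum_(0 <= i < k) (y.+1 + i) in IH1 IH2 *.
split; first by nia.
have E : (y.+1 + k) ^ 3 = (y.+1 + k) * (2 * S + (y.+1 + k) + y.+1 * y).
  have -> : 2 * S = k * (2 * y + k + 1) by lia.
  rewrite !expnS expn0. nia.
rewrite E. nia.
Qed.

Lemma pp_dvd (p d n : nat) : prime p -> d %| p ^ n -> exists a, d = p ^ a.
Proof. by move=> pp /(dvdn_pfactor _ _ pp) [m _ ->]; exists m. Qed.

Theorem theorem1 (x k p r : nat) :
  0 < x -> 0 < k -> 0 < r -> prime p ->
  (\sum_(0 <= i < k) (x + i) ^ 3 = (p ^ r) ^ 2 <->
   (exists2 c : nat, 0 < c & (x, k, p, r) = (p ^ (2 * c), 1, p, 3 * c))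
   \/ (x, k, p, r) = (1, 2, 3, 1)).
Proof.
move=> x0 k0 r0 pp.
have p1 : 1 < p by apply: prime_gt1.
split; last first.
  case=> [[c c0 [-> -> ->]]|[-> -> -> ->]].
    by rewrite big_nat1 addn0 -!expnM; congr (_ ^ _); lia.
  by rewrite /index_iota /= !big_cons big_nil.
case: x x0 => // y _.
have [K1 K2] := key y k.
set S := \sum_(0 <= i < k) (y.+1 + i) in K1 K2.
rewrite K2 -expnM => H.
have [a Ha] : exists a, S = p ^ a.
  by apply: (@pp_dvd p _ (r * 2) pp); rewrite -H dvdn_mulr.
have [b Hb] : exists b, S + y.+1 * y = p ^ b.
  by apply: (@pp_dvd p _ (r * 2) pp); rewrite -H dvdn_mull.
have ab : a <= b by rewrite -(leq_exp2l _ _ p1) -Ha -Hb leq_addr.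
have SD : S %| y.+1 * y.
  by rewrite -(dvdn_addr _ (dvdnn S)) Hb Ha dvdn_exp2l.
case: (ltngtP k 1) => [|k2|k1]; first lia; last first.
  subst k. left.
  move: H; rewrite /S big_nat1 addn0 => H.
  have [m Hm] : exists m, y.+1 = p ^ m.
    by apply: (@pp_dvd p _ (r * 2) pp); rewrite -H dvdn_mulr.
  have E' : p ^ (r * 2) = p ^ (m * 3).
    by rewrite -H expnM -Hm !expnS expn0; nia.
  have E : r * 2 = m * 3.
    by apply/eqP; rewrite -(eqn_exp2l _ _ p1) E'.
  exists (r - m); first lia.
  rewrite Hm. have -> : 2 * (r - m) = m by lia. have -> : 3 * (r - m) = r by lia. by [].
have a0 : 0 < a.
  rewrite lt0n; apply/eqP => a0; rewrite a0 expn0 in Ha; lia.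
have pS : p %| S by rewrite Ha dvdn_exp.
have pyy : p %| y.+1 * y by apply: dvdn_trans pS SD.
have notboth : ~~ ((p %| k) && (p %| 2 * y + k + 1)).
  apply/negP => /andP [pk pm].
  have p2 : p %| (2 * y + 1) by rewrite -(dvdn_addr _ pk); have -> : k + (2 * y + 1) = 2 * y + k + 1 by lia.
  move: pyy; rewrite Euclid_dvdM // => /orP [py|py].
    have : p %| (2 * y + 1) + 1.
      have -> : 2 * y + 1 + 1 = 2 * y.+1 by lia.
      exact: dvdn_mull.
    by rewrite dvdn_addr // dvdn1 => /eqP p1'; lia.
  move: p2; rewrite dvdn_addr; last exact: dvdn_mull.
  by rewrite dvdn1 => /eqP p1'; lia.
have km : k * (2 * y + k + 1) = 2 * p ^ a by rewrite -K1 Ha; lia.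
have k2' : k = 2.
  move: notboth; rewrite negb_and => /orP [nk|nm].
    have ck : coprime k (p ^ a) by rewrite coprime_sym coprimeXl // prime_coprime.
    have : k %| 2 * p ^ a by rewrite -km dvdn_mulr.
    rewrite Gauss_dvdl // => /(dvdn_leq (isT : 0 < 2)); lia.
  have cm : coprime (2 * y + k + 1) (p ^ a) by rewrite coprime_sym coprimeXl // prime_coprime.
  have : (2 * y + k + 1) %| 2 * p ^ a by rewrite -km dvdn_mull.
  rewrite Gauss_dvdl // => /(dvdn_leq (isT : 0 < 2)); lia.
subst k.
have HS : S = 2 * y + 3 by lia.
have y0 : y = 0.
  have c1 : coprime S y.+1.
    rewrite HS /coprime.
    have -> : 2 * y + 3 = 2 * y.+1 + 1 by lia.
    by rewrite gcdnC gcdnMDl gcdn1.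
  move: SD; rewrite Gauss_dvdr // HS.
  case: (posnP y) => // yp /(dvdn_leq yp); lia.
subst y. right. have HS3 : S = 3 by rewrite HS.
have p3 : p = 3.
  have : p %| 3 by rewrite -HS3.
  by rewrite dvdn_prime2 // => /eqP.
subst p.
have r1 : r = 1.
  have : 3 ^ (r * 2) = 3 ^ (1 * 2) by rewrite -H HS3.
  by move/eqP; rewrite eqn_exp2l // => /eqP; lia.
by rewrite r1.
Qed.
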